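(* Let $\tilde L$ be a minimum-size counterexample. For any two meet-irreducible elements $m_1,m_2$ of $\tilde L$, there exists a join-irreducible element $j$ of $\tilde L$ with $j\le m_1$ and $j\le m_2$.
   Context: For a poset $P$, $x$ upper covers $y$ (and $y$ lower covers $x$) if $y<x$ with nothing strictly between. Join-irreducible: upper covers exactly one element; meet-irreducible: lower covers exactly one element. For $x\in P$, ${\uparrow}x=\{y: x\le y\}$. A counterexample is a finite lattice $L$ with $|L|>1$ in which every join-irreducible $j$ satisfies $|{\uparrow}j|>|L|/2$; a minimum-size counterexample is a counterexample $\tilde L$ such that no counterexample has fewer elements. *)

(* Defs.v *)
From mathcomp Require Import all_boot all_order.
Set Implicit Arguments. Unset Strict Implicit. Unset Printing Implicit Defensive.
Import Order.Theory.
Local Open Scope order_scope.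

Definition covers {d} {T : finPOrderType d} (x y : T) : bool :=
  (y < x) && [forall z : T, ~~ ((y < z) && (z < x))].

Definition join_irr {d} {T : finPOrderType d} (j : T) : bool :=
  #|[set y : T | covers j y]| == 1%N.

Definition meet_irr {d} {T : finPOrderType d} (m : T) : bool :=
  #|[set x : T | covers x m]| == 1%N.

Definition upset {d} {T : finPOrderType d} (x : T) : {set T} :=
  [set y : T | x <= y].

Definition counterexample {d} (L : finLatticeType d) : Prop :=
  (1 < #|L|)%N /\ forall j : L, join_irr j -> (#|L| < 2 * #|upset j|)%N.

Definition min_counterexample {d} (L : finLatticeType d) : Prop :=
  counterexample L /\
  forall d' (L' : finLatticeType d'), counterexample L' -> (#|L| <= #|L'|)%N.

(* Main.v *)
Set Warnings "-notation-overridden -redundant-canonical-projection".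
From HB Require Import structures.
Require Import Defs.
From mathcomp Require Import all_boot all_order.
From mathcomp Require Import zify.
Set Implicit Arguments. Unset Strict Implicit. Unset Printing Implicit Defensive.
Import Order.Theory.
Local Open Scope order_scope.

Record mc d (L : finLatticeType d) := MC {
  mcP : pred L; mct : L; mc_Pt : mcP mct;
  mc_top : forall z, z <= mct;
  mc_PI : forall x y, mcP x -> mcP y -> mcP (x `&` y) }.

Definition subL d (L : finLatticeType d) (C : mc L) : Type := {x : L | mcP C x}.
HB.instance Definition _ d L C := Finite.copy (@subL d L C) {x : L | mcP C x}.

Section SubL.
Variables (d : Order.disp_t) (L : finLatticeType d) (C : mc L).
Local Notation S := (subL C).
Definition leS (x y : S) := (val x <= val y).
Lemma leS_refl : reflexive leS. Proof. by move=> x; rewrite /leS. Qed.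
Lemma leS_anti : antisymmetric leS.
Proof. by move=> x y /le_anti H; apply: val_inj. Qed.
Lemma leS_trans : transitive leS.
Proof. by move=> x y z; apply: le_trans. Qed.
HB.instance Definition _ := Order.Le_isPOrder.Build d S leS_refl leS_anti leS_trans.

Definition meetS (x y : S) : S := exist _ (val x `&` val y) (mc_PI (valP x) (valP y)).
Definition jv (x y : S) := \big[Order.meet/mct C]_(z | mcP C z && (val x `|` val y <= z)) z.
Lemma jvP x y : mcP C (jv x y).
Proof. rewrite /jv; elim/big_ind: _ => //; [exact: mc_Pt | exact: mc_PI|by move=> i /andP[]]. Qed.
Definition joinS (x y : S) : S := exist _ (jv x y) (jvP x y).
Lemma meetSP (x y z : S) : (x <= meetS y z) = (x <= y) && (x <= z).
Proof. exact: lexI. Qed.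
Lemma joinSP (x y z : S) : (joinS x y <= z) = (x <= z) && (y <= z).
Proof.
have -> : (x <= z) && (y <= z) = (val x `|` val y <= val z) by rewrite leUx.
have E : (joinS x y <= z) = (jv x y <= val z) by [].
rewrite E; apply/idP/idP => H.
  apply: le_trans H; rewrite /jv.
  elim/big_ind: _ => //; [exact: mc_top | by move=> a b Ha Hb; rewrite lexI Ha|by move=> i /andP[]].
rewrite /jv (bigD1 (val z)) /=; last by rewrite (valP z) H.
by rewrite leIl.
Qed.
HB.instance Definition _ := Order.POrder_MeetJoin_isLattice.Build d S meetSP joinSP.
End SubL.

Section Gen.
Variables (d : Order.disp_t) (T : finPOrderType d).

Lemma lower_cover (z j : T) : z < j -> exists w, covers j w /\ z <= w.
Proof.
move=> zj.
have Pz : (z <= z) && (z < j) by rewrite lexx zj.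
case: (@arg_maxnP T z (fun w => (z <= w) && (w < j)) (fun w => #|[set v | v <= w]|) Pz).
move=> w /andP[zw wj] Hmax.
exists w; split => //; rewrite /covers wj /=; apply/forallP => v; apply/negP => /andP[wv vj].
have := Hmax v; rewrite (le_trans zw (ltW wv)) vj => /(_ isT).
apply/negP; rewrite -ltnNge; apply: proper_card; rewrite properEneq; apply/andP; split.
  apply/eqP => E; have : v \in [set v0 | v0 <= w] by rewrite E inE.
  by rewrite inE => vw; move: (lt_le_trans wv vw); rewrite ltxx.
by apply/subsetP => x; rewrite !inE => xw; apply: le_trans xw (ltW wv).
Qed.

Lemma upper_cover (z m : T) : m < z -> exists w, covers w m /\ w <= z.
Proof.
move=> mz.
have Pz : (z <= z) && (m < z) by rewrite lexx mz.
case: (@arg_maxnP T z (fun w => (w <= z) && (m < w)) (fun w => #|[set v | w <= v]|) Pz).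
move=> w /andP[wz mw] Hmax.
exists w; split => //; rewrite /covers mw /=; apply/forallP => v; apply/negP => /andP[mv vw].
have := Hmax v; rewrite (le_trans (ltW vw) wz) mv => /(_ isT).
apply/negP; rewrite -ltnNge; apply: proper_card; rewrite properEneq; apply/andP; split.
  apply/eqP => E; have : v \in [set v0 | w <= v0] by rewrite E inE.
  by rewrite inE => wv; move: (le_lt_trans wv vw); rewrite ltxx.
by apply/subsetP => x; rewrite !inE => xw; apply: le_trans (ltW vw) xw.
Qed.

Lemma jiP (j : T) : join_irr j <-> exists u, u < j /\ forall z, z < j -> z <= u.
Proof.
split.
  move/cards1P=> [u Hu].
  have : u \in [set y | covers j y] by rewrite Hu inE.
  rewrite inE => /andP[uj _]; exists u; split => // z zj.
  have [w [cw zw]] := lower_cover zj.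
  have : w \in [set y | covers j y] by rewrite inE.
  by rewrite Hu inE => /eqP <-.
move=> [u [uj Hu]]; apply/cards1P; exists u; apply/setP => y; rewrite !inE.
apply/idP/eqP => [/andP[yj /forallP H]|->].
  case: (eqVneq y u) => // neq; have ylu : y < u by rewrite lt_neqAle neq Hu.
  by move: (H u); rewrite ylu uj.
rewrite /covers uj /=; apply/forallP => v; apply/negP => /andP[uv vj].
by move: (lt_le_trans uv (Hu v vj)); rewrite ltxx.
Qed.

Lemma miP (m : T) : meet_irr m <-> exists v, m < v /\ forall z, m < z -> v <= z.
Proof.
split.
  move/cards1P=> [u Hu].
  have : u \in [set y | covers y m] by rewrite Hu inE.
  rewrite inE => /andP[uj _]; exists u; split => // z zj.
  have [w [cw zw]] := upper_cover zj.
  have : w \in [set y | covers y m] by rewrite inE.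
  by rewrite Hu inE => /eqP <-.
move=> [u [uj Hu]]; apply/cards1P; exists u; apply/setP => y; rewrite !inE.
apply/idP/eqP => [/andP[yj /forallP H]|->].
  case: (eqVneq y u) => // neq; have ylu : u < y by rewrite lt_neqAle eq_sym neq Hu.
  by move: (H u); rewrite ylu uj.
rewrite /covers uj /=; apply/forallP => v; apply/negP => /andP[uv vj].
by move: (lt_le_trans vj (Hu v uv)); rewrite ltxx.
Qed.
End Gen.

Section Lat.
Variables (d : Order.disp_t) (L : finLatticeType d).

Lemma ex_bot (x0 : L) : exists bt : L, forall z, bt <= z.
Proof.
case: (@arg_minnP L x0 predT (fun w => #|[set v | v <= w]|) isT) => w _ Hmin.
exists w => z.
have sub : [set v | v <= w `&` z] \subset [set v | v <= w].
  by apply/subsetP => v; rewrite !inE lexI => /andP[].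
have E : [set v | v <= w `&` z] = [set v | v <= w].
  by apply/eqP; rewrite eqEcard sub /=; exact: Hmin.
have : w \in [set v | v <= w `&` z] by rewrite E inE.
by rewrite inE lexI => /andP[].
Qed.

Lemma ex_top (x0 : L) : exists tp : L, forall z, z <= tp.
Proof.
case: (@arg_maxnP L x0 predT (fun w => #|[set v | v <= w]|) isT) => w _ Hmax.
exists w => z.
have sub : [set v | v <= w] \subset [set v | v <= w `|` z].
  by apply/subsetP => v; rewrite !inE => vw; apply: le_trans vw (leUl _ _).
have E : [set v | v <= w] = [set v | v <= w `|` z].
  by apply/eqP; rewrite eqEcard sub /=; exact: Hmax.
have : w `|` z \in [set v | v <= w] by rewrite E inE.
by rewrite inE leUx => /andP[].
Qed.

Lemma atom_below (bt x : L) : (forall z, bt <= z) -> bt < x ->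
  exists j, join_irr j /\ j <= x.
Proof.
move=> Hbt btx.
have Px : (bt < x) && (x <= x) by rewrite btx lexx.
case: (@arg_minnP L x (fun j => (bt < j) && (j <= x)) (fun w => #|[set v | v <= w]|) Px).
move=> j /andP[btj jx] Hmin; exists j; split => //.
apply/jiP; exists bt; split => // z zj.
case: (eqVneq z bt) => [-> //|nzb].
have btz : bt < z by rewrite lt_neqAle eq_sym nzb Hbt.
have := Hmin z; rewrite btz (le_trans (ltW zj) jx) => /(_ isT) H; exfalso; move: H.
apply/negP; rewrite -ltnNge; apply: proper_card; rewrite properEneq; apply/andP; split.
  apply/eqP => E; have : j \in [set v | v <= z] by rewrite E inE.
  by rewrite inE => jz; move: (lt_le_trans zj jz); rewrite ltxx.
by apply/subsetP => y; rewrite !inE => yz; apply: le_trans yz (ltW zj).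
Qed.

Lemma meet_closed (m x y : L) : meet_irr m -> x != m -> y != m -> x `&` y != m.
Proof.
move=> /miP [v [mv Hv]] xm ym; apply/eqP => E.
have mx : m < x by rewrite lt_neqAle eq_sym xm -E leIl.
have my : m < y by rewrite lt_neqAle eq_sym ym -E leIr.
have : v <= x `&` y by rewrite lexI Hv // Hv.
by rewrite E => vm; move: (lt_le_trans mv vm); rewrite ltxx.
Qed.
End Lat.

Section Card.
Variables (d : Order.disp_t) (L : finLatticeType d) (C : mc L).
Lemma card_subL : #|{: subL C}| = #|[set x | mcP C x]|.
Proof. by rewrite cardsE; apply: card_sig. Qed.
Lemma leSE (x y : subL C) : (x <= y) = (val x <= val y). Proof. by []. Qed.
Lemma ltSE (x y : subL C) : (x < y) = (val x < val y).
Proof. by rewrite !lt_neqAle leSE val_eqE. Qed.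
Lemma card_upS (y : subL C) : #|upset y| = #|[set x | mcP C x & val y <= x]|.
Proof.
rewrite -(card_imset _ val_inj); apply: eq_card => x; rewrite !inE.
apply/imsetP/andP => [[z]|[Px yx]].
  by rewrite inE => yz ->; rewrite (valP z).
by exists (exist _ x Px); rewrite // inE leSE.
Qed.
End Card.

Lemma arithA (n nS k A s b : nat) : n = nS + k -> A = s + b -> (n < 2 * A)%N -> (2 * b <= k)%N -> (nS < 2 * s)%N.
Proof. lia. Qed.
Lemma arithB (n nS A s b : nat) : n = nS + 2 -> A = s + b -> b = 0 -> (n < 2 * (A + 1))%N -> (nS < 2 * s)%N.
Proof. lia. Qed.
Lemma arithC (n nS k : nat) : n = nS + k.+1 -> (n <= nS)%N -> False.
Proof. lia. Qed.

Unset Implicit Arguments.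
Theorem corollary2p11 (d : Order.disp_t) (L : finLatticeType d) :
  min_counterexample L ->
  forall m1 m2 : L, meet_irr m1 -> meet_irr m2 ->
  exists j : L, [/\ join_irr j, j <= m1 & j <= m2].
Proof.
move=> [[n1 Hce] Hmin] m1 m2 Hm1 Hm2.
case: (boolP [exists j, [&& join_irr j, j <= m1 & j <= m2]]) => [/existsP [j /and3P[? ? ?]]|Hno].
  by exists j.
exfalso.
have [bt Hbt] := ex_bot m1.
have [tp Htp] := ex_top m1.
have Hm12 : m1 `&` m2 = bt.
  apply/eqP; apply/negPn/negP => ne.
  have btm : bt < m1 `&` m2 by rewrite lt_neqAle eq_sym ne Hbt.
  have [j [ji jm]] := atom_below Hbt btm.
  move/existsP: Hno; apply; exists j; rewrite ji /=.
  by move: jm; rewrite lexI.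
have [v1 [mv1 Hv1]] := proj1 (miP m1) Hm1.
have [v2 [mv2 Hv2]] := proj1 (miP m2) Hm2.
pose P := fun x : L => (x != m1) && (x != m2).
have Ptp : P tp.
  rewrite /P; apply/andP; split; apply/eqP => E.
    by move: (lt_le_trans mv1 (Htp v1)); rewrite E ltxx.
  by move: (lt_le_trans mv2 (Htp v2)); rewrite E ltxx.
have PI : forall x y, P x -> P y -> P (x `&` y).
  move=> x y /andP[x1 x2] /andP[y1 y2]; apply/andP; split; exact: meet_closed.
pose C := @MC d L P tp Ptp Htp PI.
have nPE : forall x, ~~ P x = (x == m1) || (x == m2).
  by move=> x; rewrite /P negb_and !negbK.
have Fle : forall x y w, ~~ P x -> ~~ P y -> x != y -> w <= x -> w <= y -> w = bt.
  move=> x y w; rewrite !nPE => /orP[] /eqP -> /orP[] /eqP -> ne wx wy.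
  - by rewrite eqxx in ne.
  - by apply/eqP; rewrite eq_le Hbt andbT -Hm12 lexI wx wy.
  - by apply/eqP; rewrite eq_le Hbt andbT -Hm12 lexI wx wy.
  - by rewrite eqxx in ne.
have cardK : #|[set x | ~~ P x]| = (m1 != m2).+1.
  rewrite -cards2; apply: eq_card => x; rewrite !inE nPE //.
have cardT : #|L| = #|[set x | P x]| + #|[set x | ~~ P x]|.
  rewrite -(cardsC [set x | P x]); congr (_ + _); apply: eq_card => x; rewrite !inE //.
have HC : counterexample (subL C).
  split.
  -
    rewrite card_subL /=.
    rewrite ltnNge; apply/negP => Hle.
    have Pall : forall x, P x -> x = tp.
      move=> x Px; move/card_le1P: Hle => /(_ tp); rewrite inE => /(_ Ptp) /(_ x).
      by rewrite !inE Px => /esym /eqP.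
    have nbt : ~~ P bt.
      apply/negP => Pb; have E := Pall _ Pb.
      by move: (lt_le_trans mv1 (Htp v1)); rewrite -E => /lt_le_trans /(_ (Hbt m1)); rewrite ltxx.
    pose u := m1 `|` m2.
    have Hu : forall z, z < tp -> z <= u.
      move=> z ztp; have : ~~ P z.
        by apply/negP => Pz; move: ztp; rewrite (Pall _ Pz) ltxx.
      by rewrite nPE => /orP[] /eqP ->; [exact: leUl | exact: leUr].
    have utp : u < tp.
      rewrite lt_neqAle Htp andbT; move: nbt; rewrite nPE => /orP[] /eqP Eb.
      + rewrite /u -Eb join_r ?Hbt //; apply/eqP => E.
        by move: (lt_le_trans mv2 (Htp v2)); rewrite E ltxx.
      + rewrite /u -Eb join_l ?Hbt //; apply/eqP => E.
        by move: (lt_le_trans mv1 (Htp v1)); rewrite E ltxx.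
    have := Hce tp (proj2 (jiP tp) (ex_intro _ u (conj utp Hu))).
    have -> : #|upset tp| = 1.
      rewrite -(cards1 tp); apply: eq_card => x; rewrite !inE; apply/idP/eqP => [tx|->//].
      by apply/eqP; rewrite eq_le tx Htp.
    by move=> H; lia.
  - move=> y /jiP [u [uy Hu]].
    rewrite card_subL card_upS /=.
    set yv := val y; set uv := val u.
    have uyv : uv < yv by rewrite -ltSE.
    have Hu' : forall z, P z -> z < yv -> z <= uv.
      move=> z Pz zy; have := Hu (exist _ z Pz); rewrite ltSE leSE; exact.
    have Eup : #|upset yv| = #|[set x | P x & yv <= x]| + #|[set x | ~~ P x & yv <= x]|.
      rewrite -(cardsID [set x | P x] (upset yv)); congr (_ + _); apply: eq_card => x;
        rewrite !inE andbC //.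
    case: (boolP [forall z, (z < yv) ==> (z <= uv)]) => [/forallP HA|].
    +
      have := Hce yv (proj2 (jiP yv) (ex_intro _ uv (conj uyv (fun z zy => implyP (HA z) zy)))).
      have HB : (2 * #|[set x | ~~ P x & (yv <= x)%O]| <= (m1 != m2).+1)%N.
        case: (eqVneq m1 m2) => [Em|nem] /=.
          suff -> : #|[set x | ~~ P x & yv <= x]| = 0 by [].
          apply/eqP; rewrite cards_eq0; apply/eqP/setP => x; rewrite !inE nPE Em orbb.
          apply/negP => /andP[/eqP -> ym2].
          have ybt : yv <= bt by rewrite -Hm12 Em meetxx.
          by move: (lt_le_trans uyv (le_trans ybt (Hbt uv))); rewrite ltxx.
        suff HH : (#|[set x | ~~ P x & (yv <= x)%O]| <= 1)%N by exact: (leq_mul (leqnn 2) HH).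
        apply/card_le1P => x; rewrite inE => /andP[nPx yx] z; rewrite !inE.
        apply/idP/eqP => [/andP[nPz yz]|-> ]; last by rewrite nPx yx.
        apply/eqP; apply/negPn/negP => nzx.
        have := Fle _ _ _ nPz nPx nzx yz yx => ybt.
        by move: uyv; rewrite ybt => /lt_le_trans /(_ (Hbt uv)); rewrite ltxx.
      move=> Hlt; apply: (arithA cardT Eup Hlt); rewrite cardK; exact: HB.
    + rewrite negb_forall => /existsP [z]; rewrite negb_imply => /andP[zy nzu].
      have nPz : ~~ P z by apply/negP => Pz; rewrite Hu' in nzu.
      have Hmz : meet_irr z by move: nPz; rewrite nPE => /orP[] /eqP ->.
      have [vz [zvz Hvz]] := proj1 (miP z) Hmz.
      have zbt : z != bt by apply/eqP => E; rewrite E Hbt in nzu.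
      have vzy : vz = yv.
        apply/eqP; apply/negPn/negP => ne.
        have vzly : vz < yv by rewrite lt_neqAle ne Hvz.
        case: (boolP (P vz)) => Pvz.
          by rewrite (le_trans (ltW zvz) (Hu' _ Pvz vzly)) in nzu.
        have nezv : z != vz by apply/eqP => E; rewrite E ltxx in zvz.
        by move: zbt; rewrite (Fle _ _ _ nPz Pvz nezv (lexx z) (ltW zvz)) eqxx.
      have jiz : join_irr z.
        apply/jiP; exists (z `&` uv); split.
          rewrite lt_neqAle leIl andbT; apply/eqP => E.
          by move: nzu; rewrite -E leIr.
        move=> w wz; case: (boolP (P w)) => Pw.
          by rewrite lexI (ltW wz) Hu' // (lt_trans wz zy).
        have newz : w != z by apply/eqP => E; rewrite E ltxx in wz.
        by rewrite (Fle _ _ _ Pw nPz newz (lexx w) (ltW wz)) Hbt.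
      have := Hce z jiz.
      have Upz : upset z = z |: upset yv.
        apply/setP => x; rewrite !inE; apply/idP/orP => [zx|[/eqP ->|yx]].
        * case: (eqVneq x z) => [->|nxz]; first by left.
          by right; rewrite -vzy Hvz // lt_neqAle eq_sym nxz zx.
        * by [].
        * exact: le_trans (ltW zy) yx.
      have Ez : #|upset z| = #|upset yv| + 1.
        rewrite Upz cardsU1 inE addnC; congr (_ + _).
        by have -> : (yv <= z) = false by apply/negP => yz; move: (lt_le_trans zy yz); rewrite ltxx.
      have Enp : #|[set x | ~~ P x & yv <= x]| = 0.
        apply/eqP; rewrite cards_eq0; apply/eqP/setP => x; rewrite !inE.
        apply/negP => /andP[nPx yx].
        have nzx : z != x by apply/eqP => E; move: (lt_le_trans zy yx); rewrite E ltxx.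
        by move: zbt; rewrite (Fle _ _ _ nPz nPx nzx (lexx z) (ltW (lt_le_trans zy yx))) eqxx.
      have nem : m1 != m2.
        apply/eqP => Em; move: nPz; rewrite nPE Em orbb => /eqP Ez2.
        by move: zbt; rewrite Ez2 -Hm12 Em meetxx eqxx.
      rewrite Ez => Hlt; apply: (arithB _ Eup Enp Hlt); by rewrite cardT cardK nem.
have := Hmin _ (subL C) HC.
rewrite card_subL; apply: arithC; rewrite cardT cardK; reflexivity.
Qed.
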